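(* For any integer $n\ge0$, $B^*$ maximizes $j$, i.e. $j(D)\le j(B^* )$ for all $D\ge0$, where $$j(D):=\frac{1}{(F_{2n+1}+G_{2n+1})(D)}\left[D^{2n+1}+(B^* )^{2n+1}\frac{G_{2n+1}(D)}{F_{2n+1}(B^* )}\right].$$
   Context: $F_q(y):=\int_0^\infty u^{q-1}e^{yu-u^2/2}\,\mathrm{d}u$ and $G_q(y):=F_q(-y)$. $B^*>0$ is the unique zero of the strictly decreasing function $B\mapsto(2n+1)-BF'_{2n+1}(B)/F_{2n+1}(B)$. Moreover, $\frac{\partial}{\partial B}\frac{B^{2n+1}}{F_{2n+1}(B)}>0$ iff $B<B^*$. *)

(* Defs.v *)
From Stdlib Require Import Reals.
From Coquelicot Require Import Coquelicot.
Open Scope R_scope.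

Definition F (q : nat) (y : R) : R :=
  RInt_gen (fun u => u ^ (q - 1) * exp (y * u - u ^ 2 / 2))
           (at_point 0) (Rbar_locally p_infty).

Definition G (q : nat) (y : R) : R := F q (- y).

Definition j (n : nat) (Bs D : R) : R :=
  / (F (2 * n + 1) D + G (2 * n + 1) D) *
  (D ^ (2 * n + 1) + Bs ^ (2 * n + 1) * G (2 * n + 1) D / F (2 * n + 1) Bs).

(* Main.v *)
Require Import Defs.
From Stdlib Require Import Reals Lra Lia.
From Coquelicot Require Import Coquelicot.
Open Scope R_scope.

Lemma int_exp_bound (C b : R) : 0 <= C -> 0 <= b -> RInt (fun x => C * exp (- x)) 0 b <= C.
Proof.
intros HC Hb.
assert (H := is_RInt_derive (fun x => - C * exp (- x)) (fun x => C * exp (- x)) 0 b).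
assert (H' : is_RInt (fun x => C * exp (- x)) 0 b (minus (- C * exp (- b)) (- C * exp (- 0)))).
{ apply H.
  - intros x _. auto_derive; [easy| ring].
  - intros x _. apply (ex_derive_continuous (fun x0 => C * exp (- x0))). auto_derive. easy. }
clear H. rename H' into H.
rewrite (is_RInt_unique _ _ _ _ H). unfold minus, plus, opp; simpl. rewrite Ropp_0, exp_0.
assert (0 < exp (-b)) by apply exp_pos. nra.
Qed.

Lemma cmp_exist (f : R -> R) (C : R) :
 (forall x, continuous f x) -> (forall x, 0 <= x -> 0 <= f x <= C * exp (-x)) ->
 exists l, is_RInt_gen f (at_point 0) (Rbar_locally p_infty) l /\
   (forall b, 0 <= b -> RInt f 0 b <= l).
Proof.
intros Hc Hb.
assert (Hex : forall a b, ex_RInt f a b) by (intros; apply (@ex_RInt_continuous R_CompleteNormedModule); intros; apply Hc).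
assert (HC : 0 <= C).
{ destruct (Hb 0 (Rle_refl 0)) as [H1 H2]. assert (0 < exp (-0)) by apply exp_pos. nra. }
assert (Hmono : forall a b, 0 <= a <= b -> RInt f 0 a <= RInt f 0 b).
{ intros a b Hab. rewrite <- (RInt_Chasles f 0 a b); try apply Hex.
  assert (0 <= RInt f a b). { apply RInt_ge_0; try lra; try apply Hex. intros x Hx. apply Hb. lra. }
  change (RInt f 0 a <= RInt f 0 a + RInt f a b). lra. }
assert (Hbd : forall b, 0 <= b -> RInt f 0 b <= C).
{ intros b Hb0. eapply Rle_trans. 2: apply (int_exp_bound C b HC Hb0).
  apply RInt_le; try easy; try apply Hex.
  apply (@ex_RInt_continuous R_CompleteNormedModule). intros; apply (ex_derive_continuous (fun x0 => C * exp (- x0))); auto_derive; easy.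
  intros x Hx. apply Hb. lra. }
set (E := fun r => exists b, 0 <= b /\ r = RInt f 0 b).
destruct (completeness E) as [l [Hub Hlub]].
{ exists C. intros r [b [Hb0 ->]]. now apply Hbd. }
{ exists (RInt f 0 0). exists 0. split; [lra|easy]. }
exists l. split.
2: { intros b Hb0. apply Hub. exists b. split; easy. }
intros P [eps Heps].

  assert (Hb0 : exists b0, 0 <= b0 /\ l - eps < RInt f 0 b0).
  { destruct (Classical_Prop.classic (exists b0, 0 <= b0 /\ l - eps < RInt f 0 b0)) as [H|H]; [easy|].
    exfalso. assert (l <= l - eps). { apply Hlub. intros r [b [Hb1 ->]].
      apply Rnot_lt_le. intro H'. apply H. exists b. split; easy. }
    destruct eps as [e He]. simpl in *. lra. }
  destruct Hb0 as [b0 [Hb0 Hlt]].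
  apply (Filter_prod _ _ _ (fun x => x = 0) (fun y => b0 < y)).
  + easy.
  + exists b0. easy.
  + intros x y -> Hy. simpl. exists (RInt f 0 y). split. apply (@RInt_correct R_CompleteNormedModule), Hex. apply Heps.
    assert (RInt f 0 y <= l). { apply Hub. exists y. split; [lra|easy]. }
    assert (RInt f 0 b0 <= RInt f 0 y) by (apply Hmono; lra).
    change (Rabs (RInt f 0 y - l) < eps). rewrite Rabs_left1; lra.
Qed.

Lemma exp_le (x y : R) : x <= y -> exp x <= exp y.
Proof. intros [H|H]. left; now apply exp_increasing. right; now subst. Qed.

Lemma exp_pow (x : R) (k : nat) : exp x ^ k = exp (INR k * x).
Proof.
induction k as [|k IH]. simpl. rewrite Rmult_0_l, exp_0. ring.
rewrite S_INR. simpl. rewrite IH, <- exp_plus. f_equal. ring.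
Qed.

Definition gf (k : nat) (y u : R) : R := u ^ k * exp (y * u - u ^ 2 / 2).
Definition Ig (k : nat) (y : R) : R := RInt_gen (gf k y) (at_point 0) (Rbar_locally p_infty).

Lemma gf_cont k y u : continuous (gf k y) u.
Proof. apply (ex_derive_continuous (gf k y)). unfold gf. auto_derive. easy. Qed.

Lemma gf_nonneg k y u : 0 <= u -> 0 <= gf k y u.
Proof. intros H. unfold gf. apply Rmult_le_pos. now apply pow_le. left; apply exp_pos. Qed.

Lemma gf_bound k y u : 0 <= u -> 0 <= gf k y u <= exp ((INR k + y + 1) ^ 2 / 2) * exp (- u).
Proof.
intros H. split. now apply gf_nonneg.
unfold gf.
assert (H1 : u ^ k <= exp u ^ k).
{ apply pow_incr. split; auto. assert (H2 := exp_ineq1_le u). lra. }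
rewrite exp_pow in H1.
apply Rle_trans with (exp (INR k * u) * exp (y * u - u ^ 2 / 2)).
{ apply Rmult_le_compat_r; auto. left; apply exp_pos. }
rewrite <- !exp_plus. apply exp_le.
set (a := INR k + y + 1).
replace (INR k * u + (y * u - u ^ 2 / 2)) with (a * u - u^2/2 - u) by (unfold a; ring).
assert (0 <= (a - u)^2) by apply pow2_ge_0. nra.
Qed.

Lemma Ig_spec k y : is_RInt_gen (gf k y) (at_point 0) (Rbar_locally p_infty) (Ig k y)
  /\ forall b, 0 <= b -> RInt (gf k y) 0 b <= Ig k y.
Proof.
destruct (cmp_exist (gf k y) (exp ((INR k + y + 1) ^ 2 / 2))) as [l [H1 H2]].
- apply gf_cont.
- apply gf_bound.
- assert (E : Ig k y = l). { unfold Ig. now apply is_RInt_gen_unique. }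
  rewrite E. split; auto.
Qed.

Lemma Ig_pos k y : 0 < Ig k y.
Proof.
destruct (Ig_spec k y) as [_ H]. eapply Rlt_le_trans. 2: apply (H 1); lra.
apply RInt_gt_0. lra.
- intros x Hx. unfold gf. apply Rmult_lt_0_compat. apply pow_lt; lra. apply exp_pos.
- intros; apply gf_cont.
Qed.

Lemma gen_nonneg (g : R -> R) (l : R) :
  is_RInt_gen g (at_point 0) (Rbar_locally p_infty) l ->
  (forall x, 0 <= x -> 0 <= g x) -> 0 <= l.
Proof.
intros Hg Hpos.
assert (H0 := is_RInt_gen_scal (Fa := at_point 0) (Fb := Rbar_locally p_infty) g 0 l Hg).
assert (P1 : filter_prod (at_point 0) (Rbar_locally p_infty) (fun ab : R * R => fst ab <= snd ab)).
{ apply (Filter_prod _ _ _ (fun x => x = 0) (fun y => 0 < y)). easy. exists 0; easy.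
  intros x y -> Hy. simpl. lra. }
assert (P2 : filter_prod (at_point 0) (Rbar_locally p_infty) (fun ab : R * R =>
     forall x : R, fst ab <= x <= snd ab -> norm (scal 0 (g x)) <= g x)).
{ apply (Filter_prod _ _ _ (fun x => x = 0) (fun y => 0 < y)). easy. exists 0; easy.
  intros x y -> Hy. simpl. intros z Hz. change (Rabs (0 * g z) <= g z). rewrite Rmult_0_l, Rabs_R0. apply Hpos. lra. }
eapply Rle_trans. 2: apply (RInt_gen_norm (Fa := at_point 0) (Fb := Rbar_locally p_infty) _ g _ l P1 P2 H0 Hg).
apply norm_ge_0.
Qed.

Lemma gen_le (f g : R -> R) (lf lg : R) :
  is_RInt_gen f (at_point 0) (Rbar_locally p_infty) lf ->
  is_RInt_gen g (at_point 0) (Rbar_locally p_infty) lg ->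
  (forall x, 0 <= x -> f x <= g x) -> lf <= lg.
Proof.
intros Hf Hg Hle.
assert (H := is_RInt_gen_minus (Fa := at_point 0) (Fb := Rbar_locally p_infty) g f lg lf Hg Hf).
apply gen_nonneg in H.
- unfold minus, plus, opp in H; simpl in H. lra.
- intros x Hx. unfold minus, plus, opp; simpl. specialize (Hle x Hx). lra.
Qed.
Lemma taylor_exp (x : R) : 0 <= exp x - 1 - x <= x ^ 2 * exp (Rabs x).
Proof.
assert (H1 := exp_ineq1_le x). assert (H2 := exp_ineq1_le (- x)).
assert (E : exp (- x) * exp x = 1) by (rewrite <- exp_plus; replace (-x + x) with 0 by ring; apply exp_0).
assert (Hp := exp_pos x).
assert (H3 : exp x - 1 <= x * exp x) by nra.
split. lra.
destruct (Rle_or_lt 0 x) as [Hx|Hx].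
- rewrite Rabs_pos_eq by lra. nra.
- assert (H4 := exp_ineq1_le (Rabs x)). assert (0 <= Rabs x) by apply Rabs_pos.
  assert (0 <= x^2) by nra. nra.
Qed.

Lemma gf_shift k y z u : gf k (y + z) u = gf k y u * exp (z * u).
Proof. unfold gf. replace ((y + z) * u - u ^ 2 / 2) with ((y * u - u ^ 2 / 2) + z * u) by ring.
rewrite exp_plus. ring. Qed.

Lemma gf_S k y u : gf (S k) y u = u * gf k y u.
Proof. unfold gf. simpl. ring. Qed.

Lemma Ig_diff_bound k B h : Rabs h <= 1 ->
  0 <= Ig k (B + h) - Ig k B - h * Ig (S k) B <= h ^ 2 * Ig (S (S k)) (B + 1).
Proof.
intros Hh.
destruct (Ig_spec k (B + h)) as [H1 _]. destruct (Ig_spec k B) as [H2 _].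
destruct (Ig_spec (S k) B) as [H3 _]. destruct (Ig_spec (S (S k)) (B + 1)) as [H4 _].
assert (H3' := is_RInt_gen_scal (Fa := at_point 0) (Fb := Rbar_locally p_infty) _ h _ H3).
assert (H4' := is_RInt_gen_scal (Fa := at_point 0) (Fb := Rbar_locally p_infty) _ (h ^ 2) _ H4).
assert (H12 := is_RInt_gen_minus (Fa := at_point 0) (Fb := Rbar_locally p_infty) _ _ _ _ H1 H2).
assert (Hd := is_RInt_gen_minus (Fa := at_point 0) (Fb := Rbar_locally p_infty) _ _ _ _ H12 H3').
assert (Hpt : forall u, 0 <= u ->
   0 <= gf k (B + h) u - gf k B u - h * gf (S k) B u <= h ^ 2 * gf (S (S k)) (B + 1) u).
{ intros u Hu. rewrite (gf_shift k B h), (gf_shift (S (S k)) B 1), !gf_S.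
  assert (Hw := gf_nonneg k B u Hu). set (w := gf k B u).
  assert (Ht := taylor_exp (h * u)). destruct Ht as [Ht0 Ht].
  assert (Habs : Rabs (h * u) <= u). { rewrite Rabs_mult, (Rabs_pos_eq u) by lra. nra. }
  assert (exp (Rabs (h * u)) <= exp (1 * u)) by (apply exp_le; lra).
  assert (0 <= (h * u) ^ 2) by nra.
  assert (E : (h * u) ^ 2 = h ^ 2 * (u * u)) by ring.
  split. { assert (0 <= w * (exp (h*u) - 1 - h*u)) by (apply Rmult_le_pos; [exact Hw| exact Ht0]). lra. }
  assert (w * (exp (h * u) - 1 - h * u) <= w * ((h * u) ^ 2 * exp (1 * u))).
  { apply Rmult_le_compat_l; auto. eapply Rle_trans. apply Ht. apply Rmult_le_compat_l; auto. }
  rewrite E in H0. nra. }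
split.
- apply gen_nonneg in Hd. unfold minus, plus, opp, scal in Hd; simpl in Hd; unfold mult in Hd; simpl in Hd. lra.
  intros u Hu. unfold minus, plus, opp, scal; simpl; unfold mult; simpl. specialize (Hpt u Hu). lra.
- assert (L := gen_le _ _ _ _ Hd H4').
  unfold minus, plus, opp, scal in L; simpl in L; unfold mult in L; simpl in L. apply L.
  intros u Hu. unfold minus, plus, opp, scal; simpl; unfold mult; simpl. specialize (Hpt u Hu). lra.
Qed.

Lemma Ig_derive k B : is_derive (Ig k) B (Ig (S k) B).
Proof.
apply is_derive_Reals. intros eps Heps.
set (M := Ig (S (S k)) (B + 1)). assert (HM : 0 < M) by apply Ig_pos.
assert (Hd : 0 < Rmin 1 (eps / M)). { apply Rmin_pos. lra. apply Rdiv_lt_0_compat; lra. }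
exists (mkposreal _ Hd). intros h Hh0 Hh. simpl in Hh.
assert (Hh1 : Rabs h <= 1). { assert (Rmin 1 (eps / M) <= 1) by apply Rmin_l. lra. }
assert (Hh2 : Rabs h < eps / M). { assert (Rmin 1 (eps / M) <= eps / M) by apply Rmin_r. lra. }
destruct (Ig_diff_bound k B h Hh1) as [L U].
replace ((Ig k (B + h) - Ig k B) / h - Ig (S k) B) with ((Ig k (B + h) - Ig k B - h * Ig (S k) B) / h) by (field; auto).
unfold Rdiv. rewrite Rabs_mult, Rabs_inv, (Rabs_pos_eq (_ - _ - _)) by lra.
assert (Hpos : 0 < Rabs h) by (apply Rabs_pos_lt; auto).
apply Rmult_lt_reg_r with (Rabs h); auto. rewrite Rmult_assoc, Rinv_l by lra. rewrite Rmult_1_r.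
assert (E : h ^ 2 = Rabs h * Rabs h) by (rewrite <- Rabs_mult; simpl; rewrite Rmult_1_r; symmetry; apply Rabs_pos_eq; nra).
rewrite E in U.
assert (Rabs h * M < eps). { apply (Rmult_lt_compat_r M) in Hh2; auto. unfold Rdiv in Hh2. rewrite Rmult_assoc, Rinv_l in Hh2 by lra. lra. }
assert (Rabs h * (Rabs h * M) < Rabs h * eps) by (apply Rmult_lt_compat_l; lra).
fold M in U.
lra.
Qed.

Lemma Ig_jensen k B D a : exp a * ((1 - a) * Ig k B + (D - B) * Ig (S k) B) <= Ig k D.
Proof.
destruct (Ig_spec k B) as [H1 _]. destruct (Ig_spec (S k) B) as [H2 _]. destruct (Ig_spec k D) as [H3 _].
assert (H1' := is_RInt_gen_scal (Fa := at_point 0) (Fb := Rbar_locally p_infty) _ (exp a * (1 - a)) _ H1).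
assert (H2' := is_RInt_gen_scal (Fa := at_point 0) (Fb := Rbar_locally p_infty) _ (exp a * (D - B)) _ H2).
assert (H := is_RInt_gen_plus (Fa := at_point 0) (Fb := Rbar_locally p_infty) _ _ _ _ H1' H2').
assert (L := gen_le _ _ _ _ H H3).
unfold plus, scal in L; simpl in L; unfold mult in L; simpl in L.
replace (exp a * ((1 - a) * Ig k B + (D - B) * Ig (S k) B)) with (exp a * (1 - a) * Ig k B + exp a * (D - B) * Ig (S k) B) by ring.
apply L. intros u Hu. unfold plus, scal; simpl; unfold mult; simpl.
assert (ED : gf k D u = gf k B u * exp ((D - B) * u)) by (rewrite <- gf_shift; f_equal; ring).
rewrite ED, gf_S.
assert (Hw := gf_nonneg k B u Hu). set (w := gf k B u).
assert (E : exp ((D - B) * u) = exp a * exp ((D - B) * u - a)) by (rewrite <- exp_plus; f_equal; ring).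
assert (Ht := exp_ineq1_le ((D - B) * u - a)).
assert (Ha := exp_pos a).
assert (exp a * (1 + ((D - B) * u - a)) <= exp ((D - B) * u)) by (rewrite E; apply Rmult_le_compat_l; lra).
match goal with H : exp a * _ <= _ |- _ => assert (HH := Rmult_le_compat_l w _ _ Hw H) end.
lra.
Qed.

Theorem lemma4p2 (n : nat) (Bs : R) :
  0 < Bs ->
  INR (2 * n + 1) - Bs * Derive (F (2 * n + 1)) Bs / F (2 * n + 1) Bs = 0 ->
  forall D : R, 0 <= D -> j n Bs D <= j n Bs Bs.
Proof.
intros HB Hd D HD.
set (q := (2 * n + 1)%nat) in *.
set (k := (q - 1)%nat).
assert (HF : forall y, F q y = Ig k y) by reflexivity.
assert (HDer : Derive (F q) Bs = Ig (S k) Bs).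
{ apply is_derive_unique. apply (is_derive_ext (Ig k)). intro; symmetry; apply HF. apply Ig_derive. }
rewrite HDer, HF in Hd.
assert (HFB := Ig_pos k Bs). set (FB := Ig k Bs) in *.
assert (HS : Ig (S k) Bs = INR q * FB / Bs).
{ field_simplify_eq; [| lra]. unfold Rdiv in Hd.
  apply (Rmult_eq_compat_r FB) in Hd. rewrite Rmult_0_l in Hd.
  replace ((INR q - Bs * Ig (S k) Bs * / FB) * FB) with (INR q * FB - Bs * Ig (S k) Bs) in Hd by (field; lra).
  lra. }
set (a := INR q * (D - Bs) / Bs).
assert (HJ := Ig_jensen k Bs D a).
fold FB in HJ. rewrite HS in HJ.
replace ((1 - a) * FB + (D - Bs) * (INR q * FB / Bs)) with FB in HJ by (unfold a; field; lra).
assert (Hpow : D ^ q <= Bs ^ q * exp a).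
{ assert (Ht : D / Bs <= exp (D / Bs - 1)) by (assert (H := exp_ineq1_le (D / Bs - 1)); lra).
  assert (Ht2 : (D / Bs) ^ q <= exp (D / Bs - 1) ^ q).
  { apply pow_incr. split; auto. apply Rdiv_le_0_compat; lra. }
  rewrite exp_pow in Ht2.
  replace (INR q * (D / Bs - 1)) with a in Ht2 by (unfold a; field; lra).
  replace D with (Bs * (D / Bs)) at 1 by (field; lra).
  rewrite Rpow_mult_distr. apply Rmult_le_compat_l; auto. apply pow_le; lra. }
unfold j, G. fold q. rewrite !HF. fold FB.
assert (HFD := Ig_pos k D). assert (HGD := Ig_pos k (- D)). assert (HGB := Ig_pos k (- Bs)).
set (FD := Ig k D) in *. set (GD := Ig k (- D)) in *. set (GB := Ig k (- Bs)) in *.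
assert (HBq : 0 < Bs ^ q) by (apply pow_lt; lra).
replace (/ (FB + GB) * (Bs ^ q + Bs ^ q * GB / FB)) with (Bs ^ q * (FD + GD) / (FB * (FD + GD))) by (field; repeat split; nra).
replace (/ (FD + GD) * (D ^ q + Bs ^ q * GD / FB)) with ((D ^ q * FB + Bs ^ q * GD) / (FB * (FD + GD))) by (field; repeat split; nra).
unfold Rdiv. apply Rmult_le_compat_r.
{ left. apply Rinv_0_lt_compat. nra. }
assert (H1 : D ^ q * FB <= Bs ^ q * exp a * FB) by (apply Rmult_le_compat_r; lra).
assert (H2 : Bs ^ q * (exp a * FB) <= Bs ^ q * FD) by (apply Rmult_le_compat_l; [lra|]; lra).
nra.
Qed.
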